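(* Let $(H,\alpha_H)$ be an object of $\overline{\mathcal H}^{i,j}(Vec_\Bbbk)$, and let $m_H:H\otimes H\to H$ (written $a\otimes b\mapsto ab$) and $\eta_H:\Bbbk\to H$ (with $\eta_H(1)=1_H$) be morphisms in $\overline{\mathcal H}^{i,j}(Vec_\Bbbk)$. For the functor $\ddot H=-\otimes H$, $(X,\alpha_X)\mapsto(X\otimes H,\alpha_X\otimes\alpha_H)$, define $\ddot H_2(X,Y):(X\otimes H)\otimes(Y\otimes H)\to(X\otimes Y)\otimes H$, $(x\otimes a)\otimes(y\otimes b)\mapsto(x\otimes y)\otimes\alpha_H^i(a)\alpha_H^j(b)$, and $\ddot H_0:\Bbbk\to\Bbbk\otimes H$, $\lambda\mapsto\lambda\otimes 1_H$. Then $(\ddot H,\ddot H_2,\ddot H_0)$ is a monoidal functor on $\overline{\mathcal H}^{i,j}(Vec_\Bbbk)$ if and only if $(H,\alpha_H,m_H,\eta_H)$ is a Hom-algebra.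
   Context: $\Bbbk$ is a field of characteristic $0$; all vector spaces are finite-dimensional; $i,j$ are fixed integers. $\overline{\mathcal H}^{i,j}(Vec_\Bbbk)$ is the monoidal category whose objects are pairs $(X,\alpha_X)$ with $X$ a finite-dimensional $\Bbbk$-space and $\alpha_X$ a linear automorphism; morphisms are linear maps commuting with the $\alpha$'s; $(X,\alpha_X)\otimes(Y,\alpha_Y)=(X\otimes Y,\alpha_X\otimes\alpha_Y)$, unit $(\Bbbk,\mathrm{id})$; associativity $a_{X,Y,Z}((x\otimes y)\otimes z)=\alpha_X^{i+1}(x)\otimes(y\otimes\alpha_Z^{-j-1}(z))$; $l_X(\lambda\otimes x)=\lambda\alpha_X^{j+1}(x)$, $r_X(x\otimes\lambda)=\lambda\alpha_X^{i+1}(x)$. A Hom-algebra $(A,\mu,1_A,\alpha)$ satisfies $\alpha(a)(bc)=(ab)\alpha(c)$, $\alpha(1_A)=1_A$, $1_Aa=a1_A=\alpha(a)$. A monoidal functor $(G,G_2,G_0)$ has natural $G_2(X,Y):GX\otimes GY\to G(X\otimes Y)$ and $G_0:I\to GI$ with $G_2(X,Y\otimes Z)\circ(\mathrm{id}\otimes G_2(Y,Z))\circ a_{GX,GY,GZ}=G(a_{X,Y,Z})\circ G_2(X\otimes Y,Z)\circ(G_2(X,Y)\otimes\mathrm{id})$ and $G(r_X)\circ G_2(X,I)\circ(\mathrm{id}\otimes G_0)\circ r_{GX}^{-1}=\mathrm{id}=G(l_X)\circ G_2(I,X)\circ(G_0\otimes\mathrm{id})\circ l_{GX}^{-1}$.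 *)

(* Defs.v *)
(* Concrete model of the monoidal category
   \overline{H}^{i,j}(Vec_k):
   - an object is a pair (n, A) : a finite-dimensional space k^n (row vectors)
     together with an invertible matrix A (the automorphism alpha, acting as
     v |-> v *m A);
   - a morphism (n,A) -> (m,B) is a matrix F : 'M_(n,m) (acting as v |-> v *m F)
     with A *m F = F *m B  (i.e. alpha_Y o f = f o alpha_X);
   - composition  g o f  is  F *m G;
   - tensor product of spaces k^n (x) k^m = k^(n*m) via the Kronecker product
     (mathcomp real_closed's  tensmx, index (a,b) |-> a*m+b); tensor of maps
     is  F *t G, so (u (x) v) *m (F *t G) = (u *m F) (x) (v *m G). *)
From HB Require Import structures.
From mathcomp Require Import all_boot all_order all_algebra.
From mathcomp Require Import mxtens.
Set Implicit Arguments.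
Unset Strict Implicit.
Unset Printing Implicit Defensive.
Import Order.TTheory GRing.Theory Num.Theory.
Local Open Scope ring_scope.

Section HomTensor.
Variable K : fieldType.

Definition powz n (A : 'M[K]_n) (z : int) : 'M[K]_n :=
  match z with
  | Posz k => A ^+ k
  | Negz k => invmx A ^+ k.+1
  end.

Record Obj := MkObj { dim : nat; alpha : 'M[K]_dim }.

Definition is_obj (X : Obj) : Prop := alpha X \in unitmx.

Definition is_mor (X Y : Obj) (F : 'M[K]_(dim X, dim Y)) : Prop :=
  alpha X *m F = F *m alpha Y.

Definition tens (X Y : Obj) : Obj := MkObj (alpha X *t alpha Y).
Definition unitO : Obj := @MkObj 1 1%:M.

Definition ifst m n (k : 'I_(m * n)) : 'I_m := (mxtens_unindex k).1.
Definition isnd m n (k : 'I_(m * n)) : 'I_n := (mxtens_unindex k).2.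

(* reindexing  (x (x) y) (x) z |-> x (x) (y (x) z) *)
Definition assoc_mx n m p : 'M[K]_((n * m) * p, n * (m * p)) :=
  \matrix_(r, s) ((ifst (ifst r) == ifst s) && (isnd (ifst r) == ifst (isnd s))
                  && (isnd r == isnd (isnd s)))%:R.
(* lambda (x) x |-> lambda x   and   x (x) lambda |-> lambda x *)
Definition lunit_mx n : 'M[K]_(1 * n, n) := \matrix_(r, s) (isnd r == s)%:R.
Definition runit_mx n : 'M[K]_(n * 1, n) := \matrix_(r, s) (ifst r == s)%:R.

Variables i j : int.

(* a_{X,Y,Z}((x (x) y) (x) z) = alpha_X^{i+1}(x) (x) (y (x) alpha_Z^{-j-1}(z)) *)
Definition assocM (X Y Z : Obj) : 'M[K]_((dim X * dim Y) * dim Z, dim X * (dim Y * dim Z)) :=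
  ((powz (alpha X) (i + 1) *t 1%:M) *t powz (alpha Z) (- j - 1)) *m assoc_mx _ _ _.
(* l_X(lambda (x) x) = lambda alpha_X^{j+1}(x) *)
Definition lunitM (X : Obj) : 'M[K]_(1 * dim X, dim X) :=
  lunit_mx (dim X) *m powz (alpha X) (j + 1).
(* r_X(x (x) lambda) = lambda alpha_X^{i+1}(x) *)
Definition runitM (X : Obj) : 'M[K]_(dim X * 1, dim X) :=
  runit_mx (dim X) *m powz (alpha X) (i + 1).

(* The data (H, alpha_H, m_H, eta_H): dim h, alpha_H : 'M_h,
   m_H : 'M_(h*h, h) (a (x) b |-> ab), eta_H : 'M_(1,h) (its row is 1_H). *)
Variables (h : nat) (aH : 'M[K]_h) (mH : 'M[K]_(h * h, h)) (eta : 'M[K]_(1, h)).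
Definition HO : Obj := MkObj aH.

Definition hmul (a b : 'rV[K]_h) : 'rV[K]_h := \row_k ((a *t b) *m mH) 0 k.
Definition hone : 'rV[K]_h := eta.
Definition halpha (a : 'rV[K]_h) : 'rV[K]_h := a *m aH.

Definition is_hom_algebra : Prop :=
  [/\ forall a b c, hmul (halpha a) (hmul b c) = hmul (hmul a b) (halpha c),
      halpha hone = hone &
      forall a, hmul hone a = halpha a /\ hmul a hone = halpha a].

Definition Gobj (X : Obj) : Obj := tens X HO.
Definition Gmor (X Y : Obj) (F : 'M[K]_(dim X, dim Y)) :
  'M[K]_(dim (Gobj X), dim (Gobj Y)) := F *t (1%:M : 'M[K]_h).

(* G_2(X,Y) : (x (x) a) (x) (y (x) b) |-> (x (x) y) (x) alpha^i(a) alpha^j(b) *)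
Definition G2 (X Y : Obj) :
  'M[K]_(dim (tens (Gobj X) (Gobj Y)), dim (Gobj (tens X Y))) :=
  \matrix_(r, s)
    (((ifst (ifst r) == ifst (ifst s)) && (ifst (isnd r) == isnd (ifst s)))%:R
     * ((powz aH i *t powz aH j) *m mH)
         (mxtens_index (isnd (ifst r), isnd (isnd r))) (isnd s)).

(* G_0 : lambda |-> lambda (x) 1_H *)
Definition G0 : 'M[K]_(dim unitO, dim (Gobj unitO)) :=
  \matrix_(r, s) eta 0 (isnd s).

(* (G, G_2, G_0) is a monoidal functor on the category:
   G_2 is a natural family of morphisms, G_0 is a morphism, and the
   associativity and the two unit coherence conditions hold.
   r^{-1}, l^{-1} (inverses of the invertible unit constraints) are taken
   with pinvmx, which is the two-sided inverse of an invertible map. *)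
Definition is_monoidal_functor : Prop :=
  [/\ (forall X X' Y Y' (F : 'M[K]_(dim X, dim X')) (F' : 'M[K]_(dim Y, dim Y')),
         is_obj X -> is_obj X' -> is_obj Y -> is_obj Y' ->
         is_mor F -> is_mor F' ->
         G2 X Y *m @Gmor (tens X Y) (tens X' Y') (F *t F') = (Gmor F *t Gmor F') *m G2 X' Y'),
      (forall X Y, is_obj X -> is_obj Y ->
         @is_mor (tens (Gobj X) (Gobj Y)) (Gobj (tens X Y)) (G2 X Y)),
      @is_mor unitO (Gobj unitO) G0,
      (forall X Y Z, is_obj X -> is_obj Y -> is_obj Z ->
         assocM (Gobj X) (Gobj Y) (Gobj Z) *m (1%:M *t G2 Y Z) *m G2 X (tens Y Z)
         = (G2 X Y *t 1%:M) *m G2 (tens X Y) Z *m @Gmor (tens (tens X Y) Z) (tens X (tens Y Z)) (assocM X Y Z)) &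
      (forall X, is_obj X ->
         pinvmx (runitM (Gobj X)) *m (1%:M *t G0) *m G2 X unitO *m @Gmor (tens X unitO) X (runitM X)
           = 1%:M
         /\ pinvmx (lunitM (Gobj X)) *m (G0 *t 1%:M) *m G2 unitO X *m @Gmor (tens unitO X) X (lunitM X)
           = 1%:M)].

End HomTensor.

(* Main.v *)
Require Import Defs.
From HB Require Import structures.
From mathcomp Require Import all_boot all_order all_algebra.
From mathcomp Require Import mxtens zify.
Set Implicit Arguments.
Unset Strict Implicit.
Unset Printing Implicit Defensive.
Import GRing.Theory.
Local Open Scope ring_scope.

Section Aux.
Variable K : fieldType.

Lemma powzE n (A : 'M[K]_n.+1) z : powz A z = A ^ z.
Proof. by case: z => k //=; rewrite exprVn. Qed.

Lemma mx0eq m (A B : 'M[K]_(0, m)) : A = B.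
Proof. by apply/matrixP => [[]]. Qed.

Lemma powz_add n (A : 'M[K]_n) a b : A \in unitmx ->
  powz A (a + b) = powz A a *m powz A b.
Proof.
case: n A => [|n] A uA; first exact: mx0eq.
by rewrite !powzE exprzDr.
Qed.

Lemma powz0 n (A : 'M[K]_n) : powz A 0 = 1%:M.
Proof. by []. Qed.
Lemma powz1 n (A : 'M[K]_n) : powz A 1 = A.
Proof. by rewrite /= expr1. Qed.

Lemma powz_unit n (A : 'M[K]_n) z : A \in unitmx -> powz A z \in unitmx.
Proof.
move=> uA; have := powz_add z (- z) uA; rewrite subrr powz0 => /esym.
by case/mulmx1_unit.
Qed.
End Aux.

Section Tens.
Variable K : fieldType.

Lemma ifst_idx m n (a : 'I_m) (b : 'I_n) : ifst (mxtens_index (a, b)) = a.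
Proof. by rewrite /ifst mxtens_indexK. Qed.
Lemma isnd_idx m n (a : 'I_m) (b : 'I_n) : isnd (mxtens_index (a, b)) = b.
Proof. by rewrite /isnd mxtens_indexK. Qed.

Lemma tensE m n (u : 'rV[K]_m) (v : 'rV[K]_n) k :
  (u *t v) 0 k = u 0 (ifst k) * v 0 (isnd k).
Proof. by rewrite mxE !(ord1 (mxtens_unindex _).1) !(ord1 (mxtens_unindex _).2). Qed.

Lemma sum_tens m n (F : 'I_(m * n) -> K) :
  \sum_k F k = \sum_(a < m) \sum_(b < n) F (mxtens_index (a, b)).
Proof.
rewrite pair_big /=; apply: reindex => /=.
by exists (@mxtens_unindex m n)=> k _; rewrite (mxtens_indexK, mxtens_unindexK) //; case: k.
Qed.

Lemma act_tens m n p (u : 'rV[K]_m) (v : 'rV[K]_n) (M : 'M[K]_(m * n, p)) s :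
  ((u *t v) *m M) 0 s = \sum_a \sum_b u 0 a * v 0 b * M (mxtens_index (a, b)) s.
Proof.
rewrite mxE sum_tens; apply: eq_bigr => a _; apply: eq_bigr => b _.
by rewrite tensE ifst_idx isnd_idx.
Qed.

Lemma tens11 m n : (1%:M : 'M[K]_m) *t (1%:M : 'M[K]_n) = 1%:M.
Proof.
apply/matrixP => r s; case: (mxtens_indexP r) => a b; case: (mxtens_indexP s) => c d.
by rewrite tensmxE !mxE (inj_eq (can_inj (@mxtens_indexK _ _))) xpair_eqE -natrM mulnb.
Qed.

Lemma delta_tens m n (a : 'I_m) (b : 'I_n) :
  (delta_mx 0 a : 'rV[K]_m) *t (delta_mx 0 b : 'rV[K]_n) = delta_mx 0 (mxtens_index (a, b)).
Proof.
apply/rowP => s; case: (mxtens_indexP s) => c d.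
by rewrite tensE ifst_idx isnd_idx !mxE /= (inj_eq (can_inj (@mxtens_indexK _ _))) xpair_eqE -natrM mulnb.
Qed.

Lemma rows_ext m p (A B : 'M[K]_(m, p)) :
  (forall k, (delta_mx 0 k : 'rV_m) *m A = delta_mx 0 k *m B) -> A = B.
Proof. by move=> H; apply/row_matrixP => k; rewrite !rowE H. Qed.

Lemma tens_ext m n p (A B : 'M[K]_(m * n, p)) :
  (forall (u : 'rV_m) (v : 'rV_n), (u *t v) *m A = (u *t v) *m B) -> A = B.
Proof.
move=> H; apply: rows_ext => k; case: (mxtens_indexP k) => a b.
by rewrite -delta_tens H.
Qed.

Lemma tens_cancel m n (w : 'rV[K]_m) (x y : 'rV[K]_n) k :
  w 0 k != 0 -> w *t x = w *t y -> x = y.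
Proof.
move=> wk /matrixP H; apply/rowP => l; have := H 0 (mxtens_index (k, l)).
by rewrite !tensE ifst_idx isnd_idx => /mulfI; apply.
Qed.

Lemma tens_mulmx m n p q (u : 'rV[K]_m) (v : 'rV[K]_n) (A : 'M_(m, p)) (B : 'M_(n, q)) :
  (u *t v) *m (A *t B) = (u *m A) *t (v *m B).
Proof. exact: tensmx_mul. Qed.

Lemma invmx_tens m n (A : 'M[K]_m) (B : 'M[K]_n) : A \in unitmx -> B \in unitmx ->
  invmx (A *t B) = invmx A *t invmx B.
Proof.
move=> uA uB; have E : (A *t B) *m (invmx A *t invmx B) = 1%:M.
  by rewrite tensmx_mul !mulmxV // tens11.
have [u _] := mulmx1_unit E.
by rewrite -[RHS](mulKmx u) E mulmx1.
Qed.

Lemma powz_tens m n (A : 'M[K]_m) (B : 'M[K]_n) z : A \in unitmx -> B \in unitmx ->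
  powz (A *t B) z = powz A z *t powz B z.
Proof.
move=> uA uB; have P : forall (C : 'M[K]_m) (D : 'M[K]_n) k, (C *t D) ^+ k = C ^+ k *t D ^+ k.
  move=> C D; elim=> [|k IH]; first by rewrite !expr0 tens11.
  by rewrite !exprS IH -!mulmxE tensmx_mul.
by case: z => k /=; rewrite ?invmx_tens // P.
Qed.

Lemma powz_scal1 z : powz (1%:M : 'M[K]_1) z = 1%:M.
Proof. by case: z => k /=; rewrite ?invmx1 expr1n. Qed.

Lemma fix_powz n (v : 'rV[K]_n) (A : 'M_n) z : A \in unitmx -> v *m A = v -> v *m powz A z = v.
Proof.
move=> uA vA; have P : forall (C : 'M[K]_n) k, v *m C = v -> v *m C ^+ k = v.
  move=> C k vC; elim: k => [|k IH]; first by rewrite expr0 mulmx1.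
  by rewrite exprSr -mulmxE mulmxA IH.
case: z => k /=; apply: P => //.
by rewrite -{1}vA -mulmxA mulmxV ?mulmx1.
Qed.

Lemma conj_powz p n (M : 'M[K]_p) (A : 'M_n) (X : 'M_(p, n)) z :
  M \in unitmx -> A \in unitmx -> M *m X = X *m A -> powz M z *m X = X *m powz A z.
Proof.
move=> uM uA E; have P : forall (C : 'M[K]_p) (D : 'M[K]_n) k, C *m X = X *m D -> C ^+ k *m X = X *m D ^+ k.
  move=> C D k CD; elim: k => [|k IH]; first by rewrite !expr0 mul1mx mulmx1.
  by rewrite !exprSr -!mulmxE -mulmxA CD mulmxA IH -mulmxA.
case: z => k /=; apply: P => //.
by apply: (canLR (mulKmx uM)); rewrite mulmxA E -mulmxA mulmxV // mulmx1.
Qed.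
End Tens.

Section Struct.
Variable K : fieldType.

Lemma sum_pick n (a : 'I_n) (F : 'I_n -> K) :
  (forall x, x != a -> F x = 0) -> \sum_x F x = F a.
Proof. by move=> H; rewrite (bigD1 a) //= big1 ?addr0 // => x /H. Qed.
Arguments sum_pick {n} a {F}.

Lemma assoc_mxE m n p x y z a b c :
  assoc_mx K m n p (mxtens_index (mxtens_index (x, y), z)) (mxtens_index (a, mxtens_index (b, c)))
  = ((x == a) && (y == b) && (z == c))%:R.
Proof. by rewrite mxE !(ifst_idx, isnd_idx). Qed.

Lemma assoc_act m n p (u : 'rV[K]_m) (v : 'rV[K]_n) (w : 'rV[K]_p) :
  ((u *t v) *t w) *m assoc_mx K m n p = u *t (v *t w).
Proof.
apply/rowP => s; case: (mxtens_indexP s) => a t; case: (mxtens_indexP t) => b c.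
rewrite act_tens sum_tens.
rewrite (sum_pick a) => [|x xa]; last first.
  rewrite big1 // => y _; rewrite big1 // => z _.
  by rewrite assoc_mxE (negPf xa) mulr0.
rewrite (sum_pick b) => [|y yb]; last first.
  rewrite big1 // => z _.
  by rewrite assoc_mxE (negPf yb) andbF /= mulr0.
rewrite (sum_pick c) => [|z zc]; last first.
  by rewrite assoc_mxE (negPf zc) andbF /= mulr0.
by rewrite assoc_mxE !eqxx mulr1 !tensE !(ifst_idx, isnd_idx) mulrA.
Qed.

Lemma lunit_mxE n x y s : lunit_mx K n (mxtens_index (x, y)) s = (y == s)%:R.
Proof. by rewrite mxE isnd_idx. Qed.
Lemma runit_mxE n x y s : runit_mx K n (mxtens_index (x, y)) s = (x == s)%:R.
Proof. by rewrite mxE ifst_idx. Qed.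

Lemma lunit_act n (c : 'rV[K]_1) (u : 'rV[K]_n) :
  (c *t u) *m lunit_mx K n = c 0 0 *: u.
Proof.
apply/rowP => s; rewrite act_tens big_ord1 (sum_pick s) => [|y ys]; last first.
  by rewrite lunit_mxE (negPf ys) mulr0.
by rewrite lunit_mxE eqxx mulr1 mxE.
Qed.

Lemma runit_act n (c : 'rV[K]_1) (u : 'rV[K]_n) :
  (u *t c) *m runit_mx K n = c 0 0 *: u.
Proof.
apply/rowP => s; rewrite act_tens (sum_pick s) => [|y ys]; last first.
  by rewrite big_ord1 runit_mxE (negPf ys) mulr0.
by rewrite big_ord1 runit_mxE eqxx mulr1 mxE mulrC.
Qed.

Lemma G0E h (aH : 'M[K]_h) eta : G0 aH eta = (1%:M : 'M_1) *t eta.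
Proof.
apply/rowP => s; rewrite tensE mxE [ifst s]ord1 mxE mul1r.
by [].
Qed.

Lemma G2E (i j : int) h (aH : 'M[K]_h) mH (X Y : Obj K) x a y b x0 y0 c :
  G2 i j aH mH X Y (mxtens_index (mxtens_index (x, a), mxtens_index (y, b)))
     (mxtens_index (mxtens_index (x0, y0), c))
  = ((x == x0) && (y == y0))%:R * ((powz aH i *t powz aH j) *m mH) (mxtens_index (a, b)) c.
Proof. by rewrite mxE !(ifst_idx, isnd_idx). Qed.

Lemma G2_act (i j : int) h (aH : 'M[K]_h) mH (X Y : Obj K) (u : 'rV_(Defs.dim X)) (v : 'rV_(Defs.dim Y)) (a b : 'rV_h) :
  ((u *t a) *t (v *t b)) *m G2 i j aH mH X Y
  = (u *t v) *t (((a *m powz aH i) *t (b *m powz aH j)) *m mH).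
Proof.
apply/rowP => s; case: (mxtens_indexP s) => t c; case: (mxtens_indexP t) => x0 y0.
rewrite act_tens sum_tens.
rewrite (sum_pick x0) => [|x xa]; last first.
  rewrite big1 // => a' _; rewrite big1 // => k _.
  case: (mxtens_indexP k) => y b'.
  by rewrite G2E (negPf xa) /= mul0r mulr0.
transitivity (\sum_(a' < h) \sum_(b' < h)
   u 0 x0 * a 0 a' * (v 0 y0 * b 0 b') * ((powz aH i *t powz aH j) *m mH) (mxtens_index (a', b')) c).
  apply: eq_bigr => a' _; rewrite sum_tens (sum_pick y0) => [|y yb]; last first.
    rewrite big1 // => b' _.
    by rewrite G2E (negPf yb) andbF /= mul0r mulr0.
  apply: eq_bigr => b' _.
  by rewrite G2E !tensE !(ifst_idx, isnd_idx) !eqxx /= mul1r.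
rewrite tensE !tensE !(ifst_idx, isnd_idx) -tensmx_mul -mulmxA act_tens.
rewrite mulr_sumr; apply: eq_bigr => a' _; rewrite mulr_sumr; apply: eq_bigr => b' _.
by rewrite !mulrA; congr (_ * _); rewrite -!mulrA; congr (_ * _); rewrite mulrCA.
Qed.

End Struct.

Section Ext.
Variable K : fieldType.

Lemma delta11 : (delta_mx 0 0 : 'rV[K]_1) = 1%:M.
Proof. by apply/rowP => k; rewrite [k]ord1 !mxE. Qed.

Lemma ext2 m1 m2 p (A B : 'M[K]_(m1 * m2, p)) :
  (forall (u1 : 'rV[K]_m1) (u2 : 'rV[K]_m2), (u1 *t u2) *m A = (u1 *t u2) *m B) -> A = B.
Proof.
move=> H; apply: rows_ext => k.
case: (mxtens_indexP k) => x1 x2; by rewrite -!delta_tens H.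
Qed.

Lemma ext4 m1 m2 m3 m4 p (A B : 'M[K]_((m1 * m2) * (m3 * m4), p)) :
  (forall (u1 : 'rV[K]_m1) (u2 : 'rV[K]_m2) (u3 : 'rV[K]_m3) (u4 : 'rV[K]_m4), ((u1 *t u2) *t (u3 *t u4)) *m A = ((u1 *t u2) *t (u3 *t u4)) *m B) -> A = B.
Proof.
move=> H; apply: rows_ext => k.
case: (mxtens_indexP k) => k1 k2; case: (mxtens_indexP k1) => x1 x2; case: (mxtens_indexP k2) => x3 x4.
by rewrite -!delta_tens H.
Qed.

Lemma ext6 m1 m2 m3 m4 m5 m6 p (A B : 'M[K]_(((m1 * m2) * (m3 * m4)) * (m5 * m6), p)) :
  (forall (u1 : 'rV[K]_m1) (u2 : 'rV[K]_m2) (u3 : 'rV[K]_m3) (u4 : 'rV[K]_m4) (u5 : 'rV[K]_m5) (u6 : 'rV[K]_m6), (((u1 *t u2) *t (u3 *t u4)) *t (u5 *t u6)) *m A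
       = (((u1 *t u2) *t (u3 *t u4)) *t (u5 *t u6)) *m B) -> A = B.
Proof.
move=> H; apply: rows_ext => k.
case: (mxtens_indexP k) => k1 k2; case: (mxtens_indexP k1) => k3 k4.
case: (mxtens_indexP k3) => x1 x2; case: (mxtens_indexP k4) => x3 x4; case: (mxtens_indexP k2) => x5 x6.
by rewrite -!delta_tens H.
Qed.

Lemma extR m1 m2 p (A B : 'M[K]_((m1 * m2) * 1, p)) :
  (forall (u1 : 'rV[K]_m1) (u2 : 'rV[K]_m2), ((u1 *t u2) *t (1%:M : 'M_1)) *m A = ((u1 *t u2) *t (1%:M : 'M_1)) *m B) -> A = B.
Proof.
move=> H; apply: rows_ext => k.
case: (mxtens_indexP k) => k1 o; case: (mxtens_indexP k1) => x1 x2.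
by rewrite -!delta_tens [o]ord1 delta11 H.
Qed.

Lemma extL m1 m2 p (A B : 'M[K]_(1 * (m1 * m2), p)) :
  (forall (u1 : 'rV[K]_m1) (u2 : 'rV[K]_m2), ((1%:M : 'M_1) *t (u1 *t u2)) *m A = ((1%:M : 'M_1) *t (u1 *t u2)) *m B) -> A = B.
Proof.
move=> H; apply: rows_ext => k.
case: (mxtens_indexP k) => o k1; case: (mxtens_indexP k1) => x1 x2.
by rewrite -!delta_tens [o]ord1 delta11 H.
Qed.

Lemma tens_unit m n (A : 'M[K]_m) (B : 'M[K]_n) : A \in unitmx -> B \in unitmx ->
  (A *t B) \in unitmx.
Proof.
move=> uA uB; have E : (A *t B) *m (invmx A *t invmx B) = 1%:M.
  by rewrite tensmx_mul !mulmxV // tens11.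
by case: (mulmx1_unit E).
Qed.

Lemma pinv_sq m n (R : 'M[K]_(m, n)) : m = n -> row_full R ->
  pinvmx R *m R = 1%:M /\ R *m pinvmx R = 1%:M.
Proof.
move=> mn full; split; first exact: mulVpmx.
apply: mulmxVp; rewrite /row_free (eqP full) mn //.
Qed.

Lemma pinv_eq m n (R S : 'M[K]_(m, n)) : m = n -> row_full R ->
  (pinvmx R *m S = 1%:M <-> S = R).
Proof.
move=> mn full; have [H1 H2] := pinv_sq mn full; split => [E|->] //.
by rewrite -[S]mul1mx -H2 -mulmxA E mulmx1.
Qed.

Lemma row_full_mul m n (R : 'M[K]_(m, n)) (Q : 'M[K]_n) :
  row_full R -> Q \in unitmx -> row_full (R *m Q).
Proof.
move=> /row_fullP [B HB] uQ; apply/row_fullP; exists (invmx Q *m B).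
by rewrite mulmxA -(mulmxA (invmx Q)) HB mulmx1 mulVmx.
Qed.

Lemma runit_full n : row_full (runit_mx K n).
Proof.
apply/row_fullP; exists (\matrix_(r < n) ((delta_mx 0 r : 'rV[K]_n) *t (1%:M : 'M_1))).
apply: rows_ext => k; rewrite mulmxA -rowE.
rewrite (_ : row k _ = (delta_mx 0 k : 'rV[K]_n) *t (1%:M : 'M_1)); last by apply/rowP => s; rewrite mxE [LHS]mxE.
by rewrite runit_act mxE scale1r mulmx1.
Qed.

Lemma lunit_full n : row_full (lunit_mx K n).
Proof.
apply/row_fullP; exists (\matrix_(r < n) ((1%:M : 'M_1) *t (delta_mx 0 r : 'rV[K]_n))).
apply: rows_ext => k; rewrite mulmxA -rowE.
rewrite (_ : row k _ = (1%:M : 'M_1) *t (delta_mx 0 k : 'rV[K]_n)); last by apply/rowP => s; rewrite mxE [LHS]mxE.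
by rewrite lunit_act mxE scale1r mulmx1.
Qed.
End Ext.
Arguments pinv_eq {K m n R S} _ _.
Section Main.
Variables (K : fieldType) (i j : int) (h : nat) (aH : 'M[K]_h) (mH : 'M[K]_(h * h, h)) (eta : 'rV[K]_h).
Hypothesis uaH : aH \in unitmx.
Hypothesis mHm : (aH *t aH) *m mH = mH *m aH.
Hypothesis etam : (1%:M : 'M_1) *m eta = eta *m aH.

Local Notation P := (powz aH).
Definition mul (a b : 'rV[K]_h) : 'rV[K]_h := (a *t b) *m mH.

Lemma hmulE a b : hmul mH a b = mul a b.
Proof. by apply/rowP => k; rewrite mxE. Qed.

Lemma vPP (v : 'rV[K]_h) x y : v *m P x *m P y = v *m P (x + y).
Proof. by rewrite -mulmxA powz_add. Qed.

Lemma mulP a b z : mul a b *m P z = mul (a *m P z) (b *m P z).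
Proof.
rewrite /mul -mulmxA.
have := conj_powz z (tens_unit uaH uaH) uaH mHm.
by rewrite powz_tens // => <-; rewrite mulmxA tens_mulmx.
Qed.

Lemma etaP z : eta *m P z = eta.
Proof. by apply: fix_powz => //; rewrite -etam mul1mx. Qed.

Lemma assocL (X Y Z : Obj K) : is_obj X -> is_obj Z -> forall (u : 'rV[K]_(Defs.dim X)) (a : 'rV[K]_h) (v : 'rV[K]_(Defs.dim Y)) (b : 'rV[K]_h) (w : 'rV[K]_(Defs.dim Z)) (c : 'rV[K]_h),
  (((u *t a) *t (v *t b)) *t (w *t c)) *m
    (assocM i j (Gobj aH X) (Gobj aH Y) (Gobj aH Z) *m (1%:M *t G2 i j aH mH Y Z) *m G2 i j aH mH X (tens Y Z))
  = ((u *m powz (alpha X) (i+1)) *t (v *t (w *m powz (alpha Z) (-j-1)))) *t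
    mul (a *m P (i+1) *m P i) (mul (b *m P i) (c *m P (-j-1) *m P j) *m P j).
Proof.
move=> uX uZ u a v b w c.
rewrite /assocM !mulmxA /= !powz_tens //.
rewrite !tens_mulmx mulmx1 assoc_act tens_mulmx mulmx1.
rewrite (G2_act i j aH mH v (w *m powz (alpha Z) (- j - 1)) b (c *m P (- j - 1))).
by rewrite (@G2_act _ i j _ aH mH X (tens Y Z)).
Qed.


Lemma assocR (X Y Z : Obj K) : is_obj X -> is_obj Z -> forall (u : 'rV[K]_(Defs.dim X)) (a : 'rV[K]_h) (v : 'rV[K]_(Defs.dim Y)) (b : 'rV[K]_h) (w : 'rV[K]_(Defs.dim Z)) (c : 'rV[K]_h),
  (((u *t a) *t (v *t b)) *t (w *t c)) *m
    ((G2 i j aH mH X Y *t 1%:M) *m G2 i j aH mH (tens X Y) Z *m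
       @Gmor K h aH (tens (tens X Y) Z) (tens X (tens Y Z)) (assocM i j X Y Z))
  = ((u *m powz (alpha X) (i+1)) *t (v *t (w *m powz (alpha Z) (-j-1)))) *t
    mul (mul (a *m P i) (b *m P j) *m P i) (c *m P j).
Proof.
move=> uX uZ u a v b w c.
rewrite !mulmxA tens_mulmx (@G2_act _ i j _ aH mH X Y) mulmx1.
rewrite (@G2_act _ i j _ aH mH (tens X Y) Z) /Gmor /assocM tens_mulmx mulmx1 mulmxA.
by rewrite !tens_mulmx mulmx1 assoc_act.
Qed.

Lemma one11 : (1%:M : 'M[K]_1) 0 0 = 1.
Proof. by rewrite mxE. Qed.

Lemma runitS (X : Obj K) (u : 'rV[K]_(Defs.dim X)) (a : 'rV[K]_h) :
  ((u *t a) *t (1%:M : 'M_1)) *m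
    ((1%:M *t G0 aH eta) *m G2 i j aH mH X (unitO K) *m @Gmor K h aH (tens X (unitO K)) X (runitM i X))
  = (u *m powz (alpha X) (i+1)) *t mul (a *m P i) eta.
Proof.
rewrite !mulmxA tens_mulmx mulmx1 mul1mx G0E.
rewrite (@G2_act _ i j _ aH mH X (unitO K)) etaP /Gmor /runitM tens_mulmx mulmx1 mulmxA.
by rewrite runit_act one11 scale1r.
Qed.

Lemma runitR (X : Obj K) : is_obj X -> forall (u : 'rV[K]_(Defs.dim X)) (a : 'rV[K]_h),
  ((u *t a) *t (1%:M : 'M_1)) *m runitM i (Gobj aH X)
  = (u *m powz (alpha X) (i+1)) *t (a *m P (i+1)).
Proof.
move=> uX u a; rewrite /runitM mulmxA runit_act one11 scale1r /= powz_tens //.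
by rewrite tens_mulmx.
Qed.

Lemma lunitS (X : Obj K) (u : 'rV[K]_(Defs.dim X)) (a : 'rV[K]_h) :
  ((1%:M : 'M_1) *t (u *t a)) *m
    ((G0 aH eta *t 1%:M) *m G2 i j aH mH (unitO K) X *m @Gmor K h aH (tens (unitO K) X) X (lunitM j X))
  = (u *m powz (alpha X) (j+1)) *t mul eta (a *m P j).
Proof.
rewrite !mulmxA tens_mulmx mulmx1 mul1mx G0E.
rewrite (@G2_act _ i j _ aH mH (unitO K) X) etaP /Gmor /lunitM tens_mulmx mulmx1 mulmxA.
by rewrite lunit_act one11 scale1r.
Qed.

Lemma lunitR (X : Obj K) : is_obj X -> forall (u : 'rV[K]_(Defs.dim X)) (a : 'rV[K]_h),
  ((1%:M : 'M_1) *t (u *t a)) *m lunitM j (Gobj aH X)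
  = (u *m powz (alpha X) (j+1)) *t (a *m P (j+1)).
Proof.
move=> uX u a; rewrite /lunitM mulmxA lunit_act one11 scale1r /= powz_tens //.
by rewrite tens_mulmx.
Qed.

Lemma runit_fullG (X : Obj K) : is_obj X -> row_full (runitM i (Gobj aH X)).
Proof.
move=> uX; apply: row_full_mul; first exact: runit_full.
by apply: powz_unit; apply: tens_unit.
Qed.

Lemma lunit_fullG (X : Obj K) : is_obj X -> row_full (lunitM j (Gobj aH X)).
Proof.
move=> uX; apply: row_full_mul; first exact: lunit_full.
by apply: powz_unit; apply: tens_unit.
Qed.

Lemma commaP (v : 'rV[K]_h) z : v *m aH *m P z = v *m P z *m aH.
Proof. by rewrite -(powz1 aH) !vPP addrC. Qed.

Lemma mulaH a b : mul a b *m aH = mul (a *m aH) (b *m aH).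
Proof. by rewrite -(powz1 aH) mulP. Qed.


Lemma Pshift (v : 'rV[K]_h) z : v *m P (z + 1) = v *m P z *m aH.
Proof. by rewrite -vPP powz1. Qed.

Lemma Pe (v : 'rV[K]_h) z1 z2 : z1 = z2 -> v *m P z1 = v *m P z2.
Proof. by move=> ->. Qed.

Lemma uU : is_obj (unitO K).
Proof. by rewrite /is_obj unitmx1. Qed.

Lemma w1 : ((1%:M : 'M[K]_1) *t ((1%:M : 'M[K]_1) *t (1%:M : 'M[K]_1))) 0 (mxtens_index (0, mxtens_index (0, 0))) != 0.
Proof. by rewrite !tensE !(ifst_idx, isnd_idx) !one11 !mulr1 oner_neq0. Qed.

Lemma w2 : ((1%:M : 'M[K]_1)) 0 0 != 0.
Proof. by rewrite one11 oner_neq0. Qed.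

Lemma main_iff : is_monoidal_functor i j aH mH eta <-> is_hom_algebra aH mH eta.
Proof.
split.
- case=> Hnat Hmor H0 Has Hun; split.
  + move=> a b c; rewrite !hmulE /halpha.
    have := congr1 (mulmx ((((1%:M : 'M_1) *t (a *m P (- (i + i)))) *t ((1%:M : 'M_1) *t (b *m P (- (i + j)))))
                *t ((1%:M : 'M_1) *t (c *m P (1 - j))))) (Has _ _ _ uU uU uU).
    rewrite (assocL (Y:=unitO K) uU uU) (assocR (Y:=unitO K) uU uU) /= !powz_scal1 !mulmx1 => /(tens_cancel w1).
    rewrite !mulP !vPP.
    have e1 : - (i + i) + (i + 1 + i) = 1 by lia.
    have e2 : - (i + j) + (i + j) = 0 by lia.
    have e3 : 1 - j + (- j - 1 + (j + j)) = 0 by lia.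
    have e4 : - (i + i) + (i + i) = 0 by lia.
    have e5 : - (i + j) + (j + i) = 0 by lia.
    have e6 : 1 - j + j = 1 by lia.
    by rewrite e1 e2 e3 e4 e5 e6 powz1 !powz0 !mulmx1.
  + by rewrite /halpha /hone -etam mul1mx.
  + move=> a; split.
    * have [_ HL] := Hun _ uU; move: HL; rewrite -!(mulmxA (pinvmx _)).
      move/(pinv_eq (mul1n _) (lunit_fullG uU)) => E.
      have := congr1 (mulmx ((1%:M : 'M_1) *t ((1%:M : 'M_1) *t (a *m P (- j))))) E.
      rewrite (lunitS (X:=unitO K)) (lunitR uU) /= powz_scal1 mulmx1 => /(tens_cancel w2).
      have e0 : - j + j = 0 by lia.
      have e1 : - j + (j + 1) = 1 by lia.
      by rewrite hmulE /hone /halpha !vPP e0 e1 powz0 powz1 mulmx1 => ->.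
    * have [HR _] := Hun _ uU; move: HR; rewrite -!(mulmxA (pinvmx _)).
      move/(pinv_eq (muln1 _) (runit_fullG uU)) => E.
      have := congr1 (mulmx (((1%:M : 'M_1) *t (a *m P (- i))) *t (1%:M : 'M_1))) E.
      rewrite (runitS (X:=unitO K)) (runitR uU) /= powz_scal1 mulmx1 => /(tens_cancel w2).
      have e0 : - i + i = 0 by lia.
      have e1 : - i + (i + 1) = 1 by lia.
      by rewrite hmulE /hone /halpha !vPP e0 e1 powz0 powz1 mulmx1 => ->.
- case=> Has Hone Hu.
  have Has' : forall a b c, mul (a *m aH) (mul b c) = mul (mul a b) (c *m aH).
    by move=> a b c; rewrite -!hmulE Has.
  split.
  + move=> X X' Y Y' F F' _ _ _ _ _ _; apply: ext4 => u a v b.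
    rewrite !mulmxA (@G2_act _ i j _ aH mH X Y) /Gmor !tens_mulmx !mulmx1.
    by rewrite (@G2_act _ i j _ aH mH X' Y').
  + move=> X Y _ _; rewrite /is_mor /=; apply: ext4 => u a v b.
    rewrite !mulmxA !tens_mulmx !(@G2_act _ i j _ aH mH X Y) !tens_mulmx.
    by rewrite mulaH !commaP.
  + by rewrite /is_mor /= G0E mul1mx tens_mulmx mulmx1 -etam mul1mx.
  + move=> X Y Z uX _ uZ; apply: ext6 => u a v b w c.
    rewrite (assocL uX uZ) (assocR uX uZ); congr (_ *t _).
    rewrite !mulP !vPP.
    have e1 : i + 1 + i = (i + i) + 1 by lia.
    have e2 : - j - 1 + (j + j) = j - 1 by lia.
    have e3 : j = (j - 1) + 1 by lia.
    have e4 : j + i = i + j by lia.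
    have e5 : c *m P j = c *m P (j - 1) *m aH by rewrite -Pshift -e3.
    rewrite e1 e2 e4 Pshift e5.
    exact: Has'.
  + move=> X uX; split.
    * rewrite -!(mulmxA (pinvmx _)); apply/(pinv_eq (muln1 _) (runit_fullG uX)).
      apply: extR => u a; rewrite runitS (runitR uX); congr (_ *t _).
      by rewrite -hmulE (Hu _).2 /halpha Pshift.
    * rewrite -!(mulmxA (pinvmx _)); apply/(pinv_eq (mul1n _) (lunit_fullG uX)).
      apply: extL => u a; rewrite lunitS (lunitR uX); congr (_ *t _).
      by rewrite -hmulE (Hu _).1 /halpha Pshift.
Qed.

End Main.

Unset Implicit Arguments.
Set Strict Implicit.

Theorem lemma4p2 (K : fieldType) (charK0 : [pchar K] =i pred0) (i j : int)
    (h : nat) (aH : 'M[K]_h) (mH : 'M[K]_(h * h, h)) (eta : 'M[K]_(1, h)) :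
  is_obj (HO aH) ->
  @is_mor K (tens (HO aH) (HO aH)) (HO aH) mH ->
  @is_mor K (unitO K) (HO aH) eta ->
  (is_monoidal_functor i j aH mH eta <-> is_hom_algebra aH mH eta).
Proof.
move=> u m e; exact: (@main_iff K i j h aH mH eta u m e).
Qed.
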